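(* Let $N$ be a stepwise NFTA and $h$ the homomorphism from the free forest algebra over $\Sigma$ to the transition algebra $\mathcal{F}_N$ determined by $h(a_\Box)=\{\mathrm{SIG}(\lambda)\mid\lambda\text{ is a valid run of }N\text{ on }a_\Box\}$ for all $a\in\Sigma$. Then for every nonempty forest or context $D$ over $\Sigma$, $h(D)=\{\mathrm{SIG}(\lambda)\mid\lambda\text{ is a valid run of }N\text{ on }D\}$.
   Context: A stepwise NFTA is $N=(Q,\Sigma,\delta,\mathsf{Init},q_0,q_F)$, $\delta\subseteq Q^3$, transition $(q_1,q_2,q_3)$ written $q_1\xrightarrow{q_2}q_3$. A run on a forest $F$ assigns to each node $v$ a transition $\lambda_{\mathsf{pre}}(v)\xrightarrow{\lambda_{\mathsf{self}}(v)}\lambda_{\mathsf{post}}(v)\in\delta$ such that: $\lambda_{\mathsf{pre}}(v)\in\mathsf{Init}(\mathrm{lab}(\mathrm{parent}(v)))$ if $v$ is a non-root first child; $\lambda_{\mathsf{pre}}(v)=\lambda_{\mathsf{post}}(w)$ if $w$ is the left sibling of $v$ (including consecutive roots); $\lambda_{\mathsf{self}}(v)\in\mathsf{Init}(\mathrm{lab}(v))$ if $v$ is a leaf; $\lambda_{\mathsf{self}}(v)=\lambda_{\mathsf{post}}(w)$ if $w$ is the last child of $v$; $\lambda_{\mathsf{pre}}$ of the leftmost root is arbitrary. Runs on a context are defined the same way for the extended automaton with a fresh state $q_\Box$, $\mathsf{Init}(\Box)=\{q_\Box\}$ for the hole $\Box$, and additional transitions $(Q\setminus\{q_\Box\})\times\{q_\Box\}\times(Q\setminus\{q_\Box\})$.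 For a run with roots $v_1\le\dots\le v_k$, $\mathrm{SIG}(\lambda)=(\lambda_{\mathsf{pre}}(v_1),\lambda_{\mathsf{post}}(v_k))$ for a forest and $((\lambda_{\mathsf{pre}}(v_1),\lambda_{\mathsf{post}}(v_k)),(\lambda_{\mathsf{pre}}(\Box),\lambda_{\mathsf{post}}(\Box)))$ for a context. $a_\Box$ denotes the context consisting of an $a$-labelled root whose only child is the hole. The transition algebra $\mathcal{F}_N$ has forest elements $2^{Q^2}$, context elements $2^{(Q^2)^2}$, neutral elements $\mathrm{id}_Q$, $\mathrm{id}_{Q^2}$, and operations: $F_1\oplus F_2=\{(q_1,q_3)\mid(q_1,q_2)\in F_1,(q_2,q_3)\in F_2\}$; $C_1\odot C_2=\{((q_1,q_2),(q_5,q_6))\mid((q_1,q_2),(q_3,q_4))\in C_1,((q_3,q_4),(q_5,q_6))\in C_2\}$; $C\odot F=\{(q_1,q_2)\mid((q_1,q_2),(q_3,q_4))\in C,(q_3,q_4)\in F\}$; $F\oplus C=\{((q_1,q_3),(q_4,q_5))\mid(q_1,q_2)\in F,((q_2,q_3),(q_4,q_5))\in C\}$; $C\oplus F=\{((q_1,q_5),(q_3,q_4))\mid((q_1,q_2),(q_3,q_4))\in C,(q_2,q_5)\in F\}$. The free forest algebra consists of all forests and contexts over $\Sigma$ with concatenation and context application (substituting for the hole); a homomorphism preserves all these operations and neutral elements, and is determined by its values on the contexts $a_\Box$. *)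

(* Defs.v *)
From mathcomp Require Import all_boot.
Set Implicit Arguments. Unset Strict Implicit. Unset Printing Implicit Defensive.

Inductive tree (A : Type) : Type := Node of A & seq (tree A).
Arguments Node {A}.

Definition label {A} (t : tree A) : A := let: Node x _ := t in x.

Fixpoint tmap {A B} (f : A -> B) (t : tree A) : tree B :=
  let: Node x ch := t in Node (f x) (map (tmap f) ch).

Fixpoint tnodes {A} (t : tree A) : seq A :=
  let: Node x ch := t in x :: flatten (map tnodes ch).

Definition forest (Sigma : Type) := seq (tree Sigma).

(* Contexts: forests with exactly one hole, the hole being a leaf.
   A context is  L ++ [t] ++ R  where t is either the hole or a node
   a(C) whose children form a context C. *)
Inductive ctx (Sigma : Type) : Type :=
  | Ctx of forest Sigma & ctree Sigma & forest Sigma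
with ctree (Sigma : Type) : Type :=
  | Hole
  | CNode of Sigma & ctx Sigma.
Arguments Ctx {Sigma}.
Arguments Hole {Sigma}.
Arguments CNode {Sigma}.

Definition a_box {Sigma} (a : Sigma) : ctx Sigma :=
  Ctx [::] (CNode a (Ctx [::] Hole [::])) [::].

Definition hole_ctx {Sigma} : ctx Sigma := Ctx [::] Hole [::].

Fixpoint capp {Sigma} (C : ctx Sigma) (F : forest Sigma) : forest Sigma :=
  let: Ctx L t R := C in L ++ ctree_app t F ++ R
with ctree_app {Sigma} (t : ctree Sigma) (F : forest Sigma) : forest Sigma :=
  match t with
  | Hole => F
  | CNode a C => [:: Node a (capp C F)]
  end.

Definition fctx {Sigma} (F : forest Sigma) (C : ctx Sigma) : ctx Sigma :=
  let: Ctx L t R := C in Ctx (F ++ L) t R.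
Definition ctxf {Sigma} (C : ctx Sigma) (F : forest Sigma) : ctx Sigma :=
  let: Ctx L t R := C in Ctx L t (R ++ F).

Fixpoint ccomp {Sigma} (C1 C2 : ctx Sigma) : ctx Sigma :=
  let: Ctx L t R := C1 in
  match t with
  | Hole => ctxf (fctx L C2) R
  | CNode a C => Ctx L (CNode a (ccomp C C2)) R
  end.

(* view a context as a forest over Sigma + {hole}; the hole is a None leaf *)
Fixpoint ctx_forest {Sigma} (C : ctx Sigma) : forest (option Sigma) :=
  let: Ctx L t R := C in
  map (tmap Some) L ++ ctree_forest t ++ map (tmap Some) R
with ctree_forest {Sigma} (t : ctree Sigma) : forest (option Sigma) :=
  match t with
  | Hole => [:: Node None [::]]
  | CNode a C => [:: Node (Some a) (ctx_forest C)]
  end.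

Record nfta (Q Sigma : finType) := NFTA {
  delta : {set Q * Q * Q};   (* (q1,q2,q3) written q1 -q2-> q3 *)
  Init  : Sigma -> {set Q};
  q0    : Q;
  qF    : Q }.

(* A run is the forest decorated at every node with a transition
   (pre, self, post). *)
Section Runs.
Variables (X : Type) (S : eqType).
Variable dlt : S -> S -> S -> bool.
Variable ini : X -> S -> bool.

Definition tpre  (t : tree (X * (S * S * S))) : S := (label t).2.1.1.
Definition tself (t : tree (X * (S * S * S))) : S := (label t).2.1.2.
Definition tpost (t : tree (X * (S * S * S))) : S := (label t).2.2.

Definition sib_chain (l : seq (tree (X * (S * S * S)))) : bool :=
  sorted (fun t1 t2 => tpost t1 == tpre t2) l.

Fixpoint valid_tree (t : tree (X * (S * S * S))) : bool :=
  let: Node (x, (p, s, q)) ch := t in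
  [&& dlt p s q,
      (if ch is c :: ch' then ini x (tpre c) && (s == tpost (last c ch'))
       else ini x s),
      sib_chain ch
    & all valid_tree ch].

(* G is a valid run on the forest F (the pre of the leftmost root is arbitrary) *)
Definition is_run (F : forest X) (G : seq (tree (X * (S * S * S)))) : Prop :=
  map (tmap fst) G = F /\ sib_chain G /\ all valid_tree G.
End Runs.

Section Automaton.
Variables (Q Sigma : finType) (N : nfta Q Sigma).

Definition N_delta (p s q : Q) : bool := (p, s, q) \in delta N.
Definition N_init (a : Sigma) (q : Q) : bool := q \in Init N a.

(* extended automaton: states option Q, None = q_box *)
Definition ext_delta (p s q : option Q) : bool :=
  match p, s, q with
  | Some p, Some s, Some q => (p, s, q) \in delta N
  | Some _, None, Some _ => true
  | _, _, _ => false
  end.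
Definition ext_init (x : option Sigma) (s : option Q) : bool :=
  match x, s with
  | None, None => true
  | Some a, Some q => q \in Init N a
  | _, _ => false
  end.

(* SIG of runs on a forest: (pre of first root, post of last root) *)
Definition forest_sigs (F : forest Sigma) (pq : Q * Q) : Prop :=
  exists g gs, is_run N_delta N_init F (g :: gs) /\
     pq = (tpre g, tpost (last g gs)).

(* SIG of runs on a context:
   ((pre of first root, post of last root), (pre of hole, post of hole)) *)
Definition ctx_sigs (C : ctx Sigma) (x : (Q * Q) * (Q * Q)) : Prop :=
  exists g gs, is_run ext_delta ext_init (ctx_forest C) (g :: gs) /\
    tpre g = Some x.1.1 /\ tpost (last g gs) = Some x.1.2 /\
    exists s, (None, (Some x.2.1, s, Some x.2.2)) \in
                      (flatten (map tnodes (g :: gs))).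
End Automaton.

Section TransAlg.
Variable Q : finType.
Definition idQ : {set Q * Q} := [set x | x.1 == x.2].
Definition idQ2 : {set (Q * Q) * (Q * Q)} := [set x | x.1 == x.2].
Definition fplus (F1 F2 : {set Q * Q}) : {set Q * Q} :=
  [set x | [exists q2, ((x.1, q2) \in F1) && ((q2, x.2) \in F2)]].
Definition cdot (C1 C2 : {set (Q * Q) * (Q * Q)}) : {set (Q * Q) * (Q * Q)} :=
  [set x | [exists m, ((x.1, m) \in C1) && ((m, x.2) \in C2)]].
Definition capply (C : {set (Q * Q) * (Q * Q)}) (F : {set Q * Q}) : {set Q * Q} :=
  [set x | [exists m, ((x, m) \in C) && (m \in F)]].
Definition fplusc (F : {set Q * Q}) (C : {set (Q * Q) * (Q * Q)})
  : {set (Q * Q) * (Q * Q)} :=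
  [set x | [exists q2, ((x.1.1, q2) \in F) && (((q2, x.1.2), x.2) \in C)]].
Definition cplusf (C : {set (Q * Q) * (Q * Q)}) (F : {set Q * Q})
  : {set (Q * Q) * (Q * Q)} :=
  [set x | [exists q2, (((x.1.1, q2), x.2) \in C) && ((q2, x.1.2) \in F)]].
End TransAlg.

Definition is_hom (Q Sigma : finType)
  (hF : forest Sigma -> {set Q * Q})
  (hC : ctx Sigma -> {set (Q * Q) * (Q * Q)}) : Prop :=
  hF [::] = idQ Q /\
  hC hole_ctx = idQ2 Q /\
  (forall F1 F2, hF (F1 ++ F2) = fplus (hF F1) (hF F2)) /\
  (forall C1 C2, hC (ccomp C1 C2) = cdot (hC C1) (hC C2)) /\
  (forall C F, hF (capp C F) = capply (hC C) (hF F)) /\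
  (forall F C, hC (fctx F C) = fplusc (hF F) (hC C)) /\
  (forall C F, hC (ctxf C F) = cplusf (hC C) (hF F)).

(* Main.v *)
Require Import Defs.
From mathcomp Require Import all_boot.
From Stdlib Require Import Setoid.
Set Implicit Arguments. Unset Strict Implicit. Unset Printing Implicit Defensive.

Fixpoint tsize A (t : tree A) : nat := let: Node _ ch := t in (sumn (map (@tsize A) ch)).+1.

Lemma forest_ind' (A : Type) (P : seq (tree A) -> Prop) (H0 : P [::])
  (HS : forall x ch rest, P ch -> P rest -> P (Node x ch :: rest)) : forall F, P F.
Proof.
move=> F; move: {2}(sumn (map (@tsize A) F)) (leqnn (sumn (map (@tsize A) F))) => n.
elim: n F => [|n IH] [|[x ch] rest] //= Hn.
apply: HS; apply: IH; move: Hn; rewrite addSn ltnS; [exact: leq_trans (leq_addr _ _)|].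
exact: leq_trans (leq_addl _ _).
Qed.

Lemma nodes_map A B (f : A -> B) G :
  flatten (map tnodes (map (tmap f) G)) = map f (flatten (map tnodes G)).
Proof.
elim/forest_ind': G => //= x ch rest IH1 IH2.
by rewrite IH1 IH2 map_cat.
Qed.

Section Gen.
Variables (X S : eqType) (dlt : S -> S -> S -> bool) (ini : X -> S -> bool).
Notation T := (tree (X * (S * S * S))).
Definition nodes (G : seq T) := flatten (map tnodes G).
Definition runs F p q := exists g gs, is_run dlt ini F (g::gs) /\ tpre g = p /\ tpost (last g gs) = q.
Variable z : X.
Definition hruns F p q u v := exists g gs, is_run dlt ini F (g::gs) /\ tpre g = p /\
  tpost (last g gs) = q /\ exists s, (z,(u,s,v)) \in nodes (g::gs).

Lemma sib_cat (g : T) gs h hs : sib_chain ((g::gs) ++ (h::hs)) =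
  [&& sib_chain (g::gs), tpost (last g gs) == tpre h & sib_chain (h::hs)].
Proof. by rewrite /sib_chain /= cat_path. Qed.

Lemma all_last (P : pred T) (g : T) gs : all P (g::gs) -> P (last g gs).
Proof.
elim: gs g => [|h gs IH] g /=; first by case/andP.
by case/andP => _ H; apply: IH.
Qed.

Lemma valid_dlt t : valid_tree dlt ini t -> dlt (tpre t) (tself t) (tpost t).
Proof. by case: t => [[x [[p s] q]] ch] /= /andP[]. Qed.

Lemma runs_pre F p q : runs F p q -> exists s q', dlt p s q'.
Proof.
case=> g [gs [[_ [_ /andP [Hg _]]] [<- _]]].
by exists (tself g), (tpost g); apply: valid_dlt.
Qed.

Lemma runs_post F p q : runs F p q -> exists p' s, dlt p' s q.
Proof.
case=> g [gs [[_ [_ Ha]] [_ <-]]].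
by exists (tpre (last g gs)), (tself (last g gs)); apply: valid_dlt; apply: all_last Ha.
Qed.

Lemma hruns_runs F p q u v : hruns F p q u v -> runs F p q.
Proof. by case=> g [gs [H1 [H2 [H3 _]]]]; exists g, gs. Qed.

Lemma hruns_nohole F p q u v : z \notin flatten (map tnodes F) -> ~ hruns F p q u v.
Proof.
move=> Hz [g [gs [[HF _] [_ [_ [s Hs]]]]]].
have : z \in map fst (nodes (g::gs)) by apply/mapP; exists (z, (u, s, v)).
by rewrite /nodes -nodes_map HF (negbTE Hz).
Qed.

Lemma split_run (F1 F2 : seq (tree X)) (G : seq T) : map (tmap fst) G = F1 ++ F2 ->
  exists G1 G2, G = G1 ++ G2 /\ map (tmap fst) G1 = F1 /\ map (tmap fst) G2 = F2.
Proof.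
move=> H; exists (take (size F1) G), (drop (size F1) G); split; first by rewrite cat_take_drop.
by rewrite map_take map_drop H take_size_cat // drop_size_cat.
Qed.
End Gen.
Section G2.
Variables (X S : eqType) (dlt : S -> S -> S -> bool) (ini : X -> S -> bool).
Notation T := (tree (X * (S * S * S))).

Lemma run_split (F1 F2 : seq (tree X)) (g : T) gs : F1 <> [::] -> F2 <> [::] ->
  is_run dlt ini (F1++F2) (g::gs) -> exists gs1 g2 gs2, gs = gs1 ++ g2 :: gs2 /\
  is_run dlt ini F1 (g::gs1) /\ is_run dlt ini F2 (g2::gs2) /\ tpost (last g gs1) = tpre g2.
Proof.
move=> N1 N2 [HF [Hs Ha]].
case: (split_run HF) => G1 [G2 [HG [H1 H2]]].
case: G1 HG H1 => [|g1 gs1] HG H1; first by rewrite -H1 in N1.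
case: G2 HG H2 => [|g2 gs2] HG H2; first by rewrite -H2 in N2.
rewrite HG in Hs Ha; move: Hs Ha; rewrite -?cat_cons sib_cat all_cat => Hs Ha.
case/and3P: Hs => S1 /eqP E S2; case/andP: Ha => A1 A2.
case: HG => -> ->.
by exists gs1, g2, gs2.
Qed.

Lemma run_join (F1 F2 : seq (tree X)) (g : T) gs1 g2 gs2 :
  is_run dlt ini F1 (g::gs1) -> is_run dlt ini F2 (g2::gs2) -> tpost (last g gs1) = tpre g2 ->
  is_run dlt ini (F1++F2) (g :: gs1 ++ g2 :: gs2).
Proof.
move=> [H1 [S1 A1]] [H2 [S2 A2]] E; split; first by rewrite -cat_cons map_cat H1 H2.
by rewrite -cat_cons sib_cat all_cat S1 S2 A1 A2 E eqxx.
Qed.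

Lemma nodes_cat (G1 G2 : seq T) : nodes (G1 ++ G2) = nodes G1 ++ nodes G2.
Proof. by rewrite /nodes map_cat flatten_cat. Qed.

Lemma runs_cat F1 F2 p r : F1 <> [::] -> F2 <> [::] ->
  (runs dlt ini (F1 ++ F2) p r <-> exists q, runs dlt ini F1 p q /\ runs dlt ini F2 q r).
Proof.
move=> N1 N2; split.
  case=> g [gs [Hr [Hp Hq]]].
  case: (run_split N1 N2 Hr) => gs1 [g2 [gs2 [Egs [R1 [R2 E]]]]].
  exists (tpost (last g gs1)); split; first by exists g, gs1.
  by exists g2, gs2; split => //; split => //; rewrite -Hq Egs last_cat.
case=> q [[g1 [gs1 [R1 [P1 Q1]]]] [g2 [gs2 [R2 [P2 Q2]]]]].
exists g1, (gs1 ++ g2 :: gs2); split; first by apply: run_join => //; rewrite Q1 P2.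
by rewrite last_cat.
Qed.

Variable z : X.
Lemma hruns_cat F1 F2 p r u v : F1 <> [::] -> F2 <> [::] ->
  (hruns dlt ini z (F1 ++ F2) p r u v <-> exists q,
     (runs dlt ini F1 p q /\ hruns dlt ini z F2 q r u v) \/
     (hruns dlt ini z F1 p q u v /\ runs dlt ini F2 q r)).
Proof.
move=> N1 N2; split.
  case=> g [gs [Hr [Hp [Hq [s Hs]]]]].
  case: (run_split N1 N2 Hr) => gs1 [g2 [gs2 [Egs [R1 [R2 E]]]]].
  exists (tpost (last g gs1)).
  rewrite Egs -cat_cons nodes_cat mem_cat in Hs.
  case/orP: Hs => Hs.
    right; split; first by exists g, gs1; do 3 split => //; exists s.
    by exists g2, gs2; split => //; split => //; rewrite -Hq Egs last_cat.
  left; split; first by exists g, gs1.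
  exists g2, gs2; split => //; split => //; split; first by rewrite -Hq Egs last_cat.
  by exists s.
case=> q [[[g1 [gs1 [R1 [P1 Q1]]]] [g2 [gs2 [R2 [P2 [Q2 [s Hs]]]]]]]|
          [[g1 [gs1 [R1 [P1 [Q1 [s Hs]]]]]] [g2 [gs2 [R2 [P2 Q2]]]]]].
  exists g1, (gs1 ++ g2 :: gs2); split; first by apply: run_join => //; rewrite Q1 P2.
  split => //; split; first by rewrite last_cat.
  by exists s; rewrite -cat_cons nodes_cat mem_cat Hs orbT.
exists g1, (gs1 ++ g2 :: gs2); split; first by apply: run_join => //; rewrite Q1 P2.
split => //; split; first by rewrite last_cat.
by exists s; rewrite -cat_cons nodes_cat mem_cat Hs.
Qed.

Lemma runs_node x ch p q : runs dlt ini [:: Node x ch] p q <->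
  exists s, dlt p s q /\ (if ch is [::] then ini x s else exists r, ini x r /\ runs dlt ini ch r s).
Proof.
split.
  case=> g [gs [[Hm [_ Hv]] [Hp Hq]]].
  case: gs Hm Hv Hq => [|g' gs] Hm Hv Hq; last by case: Hm.
  case: g Hm Hv Hp Hq => [[x' [[p' s'] q']] chG] /= [<- Hch] /andP [Hv _] <- <-.
  case/and4P: Hv => Hd Hi Hs Ha.
  exists s'; split => //.
  case: chG Hch Hi Hs Ha => [|c cs] <- //= /andP [Hi /eqP ->] Hs Ha.
  by exists (tpre c); split => //; exists c, cs.
case=> s [Hd H].
case: ch H => [|c ch] H.
  exists (Node (x, (p, s, q)) [::]), [::]; do !split => //=.
  by rewrite Hd H.
case: H => r [Hi [g [gs [[Hm [Hs Ha]] [Hp Hq]]]]].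
exists (Node (x, (p, s, q)) (g :: gs)), [::]; do !split => //=.
  by rewrite -Hm.
move: Hs Ha; rewrite /sib_chain /= => -> /andP [-> ->].
by rewrite Hd Hp Hi Hq eqxx.
Qed.

Lemma hruns_node x ch p q u v : x != z ->
  (hruns dlt ini z [:: Node x ch] p q u v <->
   exists s r, dlt p s q /\ ini x r /\ hruns dlt ini z ch r s u v).
Proof.
move=> Hxz; split.
  case=> g [gs [[Hm [_ Hv]] [Hp [Hq [s0 Hn]]]]].
  case: gs Hm Hv Hq Hn => [|g' gs] Hm Hv Hq Hn; last by case: Hm.
  case: g Hm Hv Hp Hq Hn => [[x' [[p' s'] q']] chG] /= [Ex Hch] /andP [Hv _] <- <-.
  subst x'; rewrite /nodes /= cats0 in_cons => /orP [/eqP [] E|Hn]; first by rewrite E eqxx in Hxz.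
  case/and4P: Hv => Hd Hi Hs Ha.
  case: chG Hch Hi Hs Ha Hn => [|c cs] Hch //= /andP [Hi /eqP Es] Hs Ha Hn.
  exists s', (tpre c); do 2 split => //=.
  by exists c, cs; do 3 split => //; exists s0.
case=> s [r [Hd [Hi [g [gs [[Hm [Hs Ha]] [Hp [Hq [s0 Hn]]]]]]]]].
exists (Node (x, (p, s, q)) (g :: gs)), [::]; do !split => //=.
- by rewrite -Hm.
- move: Hs Ha; rewrite /sib_chain /= => -> /andP [-> ->].
  by rewrite Hd Hp Hi Hq eqxx.
- by exists s0; rewrite /nodes /= cats0 in_cons Hn orbT.
Qed.

Lemma hruns_hole p q u v : hruns dlt ini z [:: Node z [::]] p q u v <->
  p = u /\ q = v /\ exists s, dlt p s q /\ ini z s.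
Proof.
split.
  case=> g [gs [[Hm [_ Hv]] [Hp [Hq [s0 Hn]]]]].
  case: gs Hm Hv Hq Hn => [|g' gs] Hm Hv Hq Hn; last by case: Hm.
  case: g Hm Hv Hp Hq Hn => [[x' [[p' s'] q']] chG] /= [Ex Hch] /andP [Hv _] <- <-.
  subst x'; rewrite /nodes /=.
  case: chG Hch Hv => // _ /and4P [Hd Hi _ _].
  rewrite inE => /eqP [] -> _ ->; do 2 split => //; by exists s'.
case=> <- [<- [s [Hd Hi]]].
exists (Node (z, (p, s, q)) [::]), [::]; do !split => //=.
- by rewrite Hd Hi.
- by exists s; rewrite /nodes /= inE.
Qed.

End G2.
Section Aut.
Variables (Q Sigma : finType) (N : nfta Q Sigma).
Notation RN := (runs (N_delta N) (N_init N)).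
Notation RE := (runs (ext_delta N) (ext_init N)).
Notation HE := (hruns (ext_delta N) (ext_init N) None).

Lemma fs_runs F p q : forest_sigs N F (p,q) <-> RN F p q.
Proof.
split; case=> g [gs [H E]]; exists g, gs; split => //.
  by case: E => -> ->.
by case: E => <- <-.
Qed.

Lemma cs_hruns C p q u v : ctx_sigs N C ((p,q),(u,v)) <->
  HE (ctx_forest C) (Some p) (Some q) (Some u) (Some v).
Proof. by []. Qed.

Lemma ext_pre p s q : ext_delta N p s q -> exists p', p = Some p'.
Proof. by case: p => [p'|] //; exists p'. Qed.
Lemma ext_post p s q : ext_delta N p s q -> exists q', q = Some q'.
Proof. by case: p; case: s; case: q => // q' *; exists q'. Qed.
Lemma ext_initS a r : ext_init N (Some a) r -> exists r', r = Some r' /\ N_init N a r'.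
Proof. by case: r => // r' H; exists r'. Qed.

Lemma RE_pre F p q : RE F p q -> exists p', p = Some p'.
Proof. by case/runs_pre => s [q' /ext_pre]. Qed.
Lemma RE_post F p q : RE F p q -> exists q', q = Some q'.
Proof. by case/runs_post => p' [s /ext_post]. Qed.

Lemma transfer F : F <> [::] -> forall p q,
  RN F p q <-> RE (map (tmap Some) F) (Some p) (Some q).
Proof.
elim/forest_ind': F => // x ch rest IH1 IH2 _.
have Hn : forall p q, RN [:: Node x ch] p q <-> RE [:: Node (Some x) (map (tmap Some) ch)] (Some p) (Some q).
  move=> p q; rewrite !runs_node; split.
    case=> s [Hd H]; exists (Some s); split => //.
    case: ch IH1 H => [|c ch] IH1 //= [r [Hi Hr]].
    by exists (Some r); split => //; apply/IH1.
  case=> s [Hd H].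
  case: ch IH1 H => [|c ch] IH1 /= H.
    by case/ext_initS: H => s' [Es Hi]; subst s; exists s'.
  case: H => r [/ext_initS [r' [-> Hi]] Hr].
  case/RE_post: (Hr) => s' Es; subst s.
  by exists s'; split => //; exists r'; split => //; apply/IH1.
case: rest IH2 => [|t rest] IH2 p q; first exact: Hn.
rewrite -[Node x ch :: _]cat1s map_cat !runs_cat //.
split.
  case=> m [H1 H2]; exists (Some m); split; first exact/Hn.
  by apply/IH2.
case=> m [H1 H2]; case/RE_post: (H1) => m' Em; subst m.
exists m'; split; first exact/Hn.
by apply/IH2.
Qed.

End Aut.

Section Mem.
Variable Q : finType.
Implicit Types (A B : {set Q * Q}) (C D : {set (Q * Q) * (Q * Q)}).
Lemma mem_fplus A B p r : (p, r) \in fplus A B <-> exists q, (p, q) \in A /\ (q, r) \in B.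
Proof. rewrite inE; split => [/existsP [m /andP [? ?]]|[m [? ?]]]; [by exists m|by apply/existsP; exists m; apply/andP]. Qed.
Lemma mem_capply C A x : x \in capply C A <-> exists m, (x, m) \in C /\ m \in A.
Proof. rewrite inE; split => [/existsP [m /andP [? ?]]|[m [? ?]]]; [by exists m|by apply/existsP; exists m; apply/andP]. Qed.
Lemma mem_cdot C D x y : (x, y) \in cdot C D <-> exists m, (x, m) \in C /\ (m, y) \in D.
Proof. rewrite inE; split => [/existsP [m /andP [? ?]]|[m [? ?]]]; [by exists m|by apply/existsP; exists m; apply/andP]. Qed.
Lemma mem_fplusc A C p q y : ((p, q), y) \in fplusc A C <-> exists m, (p, m) \in A /\ ((m, q), y) \in C.
Proof. rewrite inE; split => [/existsP [m /andP [? ?]]|[m [? ?]]]; [by exists m|by apply/existsP; exists m; apply/andP]. Qed.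
Lemma mem_cplusf C A p q y : ((p, q), y) \in cplusf C A <-> exists m, ((p, m), y) \in C /\ (m, q) \in A.
Proof. rewrite inE; split => [/existsP [m /andP [? ?]]|[m [? ?]]]; [by exists m|by apply/existsP; exists m; apply/andP]. Qed.
End Mem.

Section Main.
Variables (Q Sigma : finType) (N : nfta Q Sigma).
Notation RN := (runs (N_delta N) (N_init N)).
Notation RE := (runs (ext_delta N) (ext_init N)).
Notation HE := (hruns (ext_delta N) (ext_init N) None).

Lemma abox_sigs a p q u v : HE (ctx_forest (a_box a)) (Some p) (Some q) (Some u) (Some v) <->
  (p, v, q) \in delta N /\ u \in Init N a.
Proof.
rewrite [ctx_forest _]/= hruns_node //; split.
  case=> s [r [Hd [Hi /hruns_hole [Er [Es _]]]]]; subst r s; by split.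
case=> Hd Hi; exists (Some v), (Some u); do 2 split => //.
by apply/hruns_hole; do 2 split => //; exists None.
Qed.

Lemma HE_cons_ne (F : forest Sigma) : None \notin flatten (map tnodes (map (tmap Some) F)).
Proof. by apply/negP; rewrite nodes_map => /mapP [? _]. Qed.

Variables (hF : forest Sigma -> {set Q * Q}) (hC : ctx Sigma -> {set (Q * Q) * (Q * Q)}).
Hypothesis Hh : is_hom hF hC.
Hypothesis Hab : forall (a : Sigma) x, x \in hC (a_box a) <-> ctx_sigs N (a_box a) x.

Lemma habox a p q r s : ((p,q),(r,s)) \in hC (a_box a) <-> (p, s, q) \in delta N /\ r \in Init N a.
Proof. by rewrite Hab cs_hruns abox_sigs. Qed.

Lemma forest_part F : F <> [::] -> forall p q, (p, q) \in hF F <-> RN F p q.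
Proof.
case: Hh => [H0 [H1 [Hpl [Hcd [Hca [Hfc Hcf]]]]]].
elim/forest_ind': F => // x ch rest IH1 IH2 _.
have Hn : forall p q, (p, q) \in hF [:: Node x ch] <-> RN [:: Node x ch] p q.
  move=> p q.
  have -> : [:: Node x ch] = capp (a_box x) ch by rewrite /= cats0.
  rewrite Hca mem_capply.
  have -> : capp (a_box x) ch = [:: Node x ch] by rewrite /= cats0.
  rewrite runs_node; split.
    case=> [[r s] [/habox [Hd Hi] Hm]]; exists s; split => //.
    case: ch IH1 Hm => [|c ch] IH1 Hm.
      by rewrite H0 inE /= in Hm; rewrite -(eqP Hm).
    by exists r; split => //; apply/IH1.
  case=> s [Hd H]; case: ch IH1 H => [|c ch] IH1 H.
    by exists (s, s); split; [apply/habox | rewrite H0 inE].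
  case: H => r [Hi Hr]; exists (r, s); split; first exact/habox.
  exact/IH1.
case: rest IH2 => [|t rest] IH2 p q; first exact: Hn.
rewrite -[Node x ch :: _]cat1s Hpl mem_fplus runs_cat //.
split; case=> m [A B]; exists m; split; try exact/Hn; exact/IH2.
Qed.

Lemma HE_left L B p r u v : B <> [::] ->
  (HE (map (tmap Some) L ++ B) (Some p) r u v <-> exists m, (p, m) \in hF L /\ HE B (Some m) r u v).
Proof.
case: Hh => [H0 _] HB.
case: L => [|t L].
  split; first by move=> H; exists p; rewrite H0 inE eqxx.
  by case=> m [Hm H]; rewrite H0 inE /= in Hm; rewrite (eqP Hm).
rewrite hruns_cat //; split.
  case=> m [[A B']|[A _]]; last by case: (hruns_nohole (HE_cons_ne (t :: L)) A).
  case/RE_post: (A) => m' Em; subst m.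
  by exists m'; split => //; apply/forest_part => //; apply/transfer.
case=> m [A B']; exists (Some m); left; split => //.
by apply/transfer => //; apply/forest_part.
Qed.

Lemma HE_right B R p q u v : B <> [::] ->
  (HE (B ++ map (tmap Some) R) (Some p) (Some q) u v <-> exists m, HE B (Some p) (Some m) u v /\ (m, q) \in hF R).
Proof.
case: Hh => [H0 _] HB.
case: R => [|t R].
  rewrite cats0; split; first by move=> H; exists q; rewrite H0 inE eqxx.
  by case=> m [H Hm]; rewrite H0 inE /= in Hm; rewrite -(eqP Hm).
rewrite hruns_cat //; split.
  case=> m [[_ A]|[A B']]; first by case: (hruns_nohole (HE_cons_ne (t :: R)) A).
  case/RE_pre: (B') => m' Em; subst m.
  by exists m'; split => //; apply/forest_part => //; apply/transfer.
case=> m [A B']; exists (Some m); right; split => //.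
by apply/transfer => //; apply/forest_part.
Qed.

Scheme ctx_ind2 := Induction for ctx Sort Prop with ctree_ind2 := Induction for ctree Sort Prop.

Lemma ctx_part C p q u v : ((p,q),(u,v)) \in hC C <->
  HE (ctx_forest C) (Some p) (Some q) (Some u) (Some v).
Proof.
case: Hh => [H0 [H1 [Hpl [Hcd [Hca [Hfc Hcf]]]]]].
move: C p q u v.
apply: (@ctx_ind2 Sigma _
  (fun t => forall p q u v, ((p,q),(u,v)) \in hC (Ctx [::] t [::]) <->
     HE (ctree_forest t) (Some p) (Some q) (Some u) (Some v))).
- move=> L t IH R p q u v.
  have -> : Ctx L t R = ctxf (fctx L (Ctx [::] t [::])) R by rewrite /= cats0.
  have Hne : ctree_forest t <> [::] by case: t {IH}.
  rewrite Hcf Hfc mem_cplusf [ctx_forest _]/= !cats0 HE_left; last by case: t {IH Hne}.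
  split.
    case=> m [/mem_fplusc [m1 [A B]] C]; exists m1; split => //.
    by apply/(HE_right _ _ _ _ _ Hne); exists m; split => //; apply/IH.
  case=> m1 [A /(HE_right _ _ _ _ _ Hne) B].
  case: B => m [B C]; exists m; split => //; apply/mem_fplusc; exists m1; split => //.
  exact/IH.
- move=> p q u v; rewrite [Ctx _ _ _]/(hole_ctx) H1 inE /= hruns_hole; split.
    by move/eqP => [-> ->]; do 2 split => //; exists None.
  by case=> [[->] [[->] _]].
- move=> a C IH p q u v.
  have -> : Ctx [::] (CNode a C) [::] = ccomp (a_box a) C.
    by case: C {IH} => L t R /=; rewrite cats0.
  rewrite Hcd mem_cdot /= hruns_node //; split.
    case=> [[r s] [/habox [Hd Hi] B]]; exists (Some s), (Some r); do 2 split => //.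
    exact/IH.
  case=> s [r [Hd [/ext_initS [r' [Er Hi]] B]]]; subst r.
  case/hruns_runs/RE_post: (B) => s' Es; subst s.
  by exists (r', s'); split; [apply/habox | apply/IH].
Qed.
End Main.

Theorem lemma4p5 (Q Sigma : finType) (N : nfta Q Sigma)
  (hF : forest Sigma -> {set Q * Q})
  (hC : ctx Sigma -> {set (Q * Q) * (Q * Q)}) :
  is_hom hF hC ->
  (forall (a : Sigma) x, x \in hC (a_box a) <-> ctx_sigs N (a_box a) x) ->
  (forall F : forest Sigma, F <> [::] ->
     forall x, x \in hF F <-> forest_sigs N F x) /\
  (forall C : ctx Sigma, forall x, x \in hC C <-> ctx_sigs N C x).
Proof.
move=> Hh Hab; split.
  move=> F HF [p q]; rewrite fs_runs; exact: (forest_part Hh Hab HF).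
move=> C [[p q] [u v]]; rewrite cs_hruns; exact: (ctx_part Hh Hab).
Qed.
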